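(* Let $L,L',q\in\mathbb{N}$, $x\in\mathbb{Z}$, with $L'\leq L/\lambda(q)$. If $B\subseteq[1,L]$ and $B'\subseteq\{\ell\in[1,L']: x+\ell\lambda(q)\in B\}$, then for every $d\in\mathbb{N}$, $$\mathcal{R}_{qd}(B',L')\leq\mathcal{R}_d(B,L).$$
   Context: Let $h\in\mathbb{Z}[x]$ have degree $k\ge2$ and positive leading coefficient, and be $\mathcal{P}$-intersective: for every prime $p$ there is $z_p\in\mathbb{Z}_p$ with $h(z_p)=0$, $z_p\not\equiv0\bmod p$; fix such $z_p$. Let $s=2^k+6$. For $d\in\mathbb{N}$, $r_d$ is the unique integer in $(-d,0]$ with $r_d\equiv z_p\bmod p^{v_p(d)}$ for all primes $p\mid d$. $\lambda$ is completely multiplicative with $\lambda(p)=p^m$, $m$ the multiplicity of $z_p$ as a root of $h$. $h_d(x)=h(r_d+dx)/\lambda(d)$; $\Lambda_d=\{x\in\mathbb{N}:r_d+dx\text{ prime}\}$; $\nu_d(x)=\frac{\phi(d)}{d}\log(r_d+dx)1_{\Lambda_d}(x)$; $H_d(L)=\{y\in\mathbb{N}:0<h_d(y)<L/s\}$; and for $B\subseteq[1,L]$, $\mathcal{R}_d(B,L)=\sum_{x\in\mathbb{Z},\,y\in H_d(L)}1_B(x)1_B(x+h_d(y))\nu_d(y)$. Here $[1,L]=\{1,\dots,L\}$. *)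

(* Defs.v *)
From HB Require Import structures.
From mathcomp Require Import all_boot all_order all_algebra.
From mathcomp Require Import all_classical all_reals all_analysis.
Set Implicit Arguments. Unset Strict Implicit. Unset Printing Implicit Defensive.
Import Order.TTheory GRing.Theory Num.Theory.
Local Open Scope ring_scope.
Local Open Scope classical_set_scope.

Definition lam (m : nat -> nat) (d : nat) : nat :=
  (\prod_(p <- primes d) p ^ (m p * logn p d))%N.

Definition sconst (h : {poly int}) : nat := (2 ^ (size h).-1 + 6)%N.

Definition hd (h : {poly int}) (r : nat -> int) (m : nat -> nat) (d y : nat) : rat :=
  (h.[r d + d%:Z * y%:Z])%:~R / (lam m d)%:R.

Definition Hd (h : {poly int}) (r : nat -> int) (m : nat -> nat) (d L : nat) : set nat :=
  [set y | (0 < y)%N /\ 0 < hd h r m d y /\ hd h r m d y < L%:R / (sconst h)%:R].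

Definition prime_int (t : int) : bool := (0 < t) && prime `|t|%N.

Definition nu (R : realType) (r : nat -> int) (d y : nat) : R :=
  if (0 < y)%N && prime_int (r d + d%:Z * y%:Z)
  then (totient d)%:R / d%:R * ln ((r d + d%:Z * y%:Z)%:~R)
  else 0.

Definition indR (R : realType) (B : set int) (t : rat) : R :=
  if `[< exists2 z : int, t = z%:~R & B z >] then 1 else 0.

Definition Rsum (R : realType) (h : {poly int}) (r : nat -> int) (m : nat -> nat)
    (d : nat) (B : set int) (L : nat) : \bar R :=
  (\esum_(xy in [set xy : int * nat | Hd h r m d L xy.2])
     ((indR R B xy.1%:~R * indR R B (xy.1%:~R + hd h r m d xy.2) * nu R r d xy.2)%:E))%E.

(* Main.v *)
Require Import Defs.
From HB Require Import structures.
From mathcomp Require Import all_boot all_order all_algebra.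
From mathcomp Require Import all_classical all_reals all_analysis.
From mathcomp Require Import ring lra zify.
Import Order.TTheory GRing.Theory Num.Theory.
Local Open Scope ring_scope.
Local Open Scope classical_set_scope.

Lemma count_coprime_period (d q : nat) :
  (\sum_(0 <= i < q * d) coprime d i = q * \sum_(0 <= i < d) coprime d i)%N.
Proof.
elim: q => [|q IH]; first by rewrite mul0n big_geq.
rewrite mulSn (big_cat_nat _ (n:=q*d)) ?leq_addl //= IH addnC; congr (_ + _)%N.
rewrite -{1}(add0n (q*d)%N) big_addn addnK; apply: eq_bigr => i _.
by rewrite -coprime_modr addnC modnMDl coprime_modr.
Qed.


Lemma totient_mul_le (q d : nat) : (totient (q * d) <= q * totient d)%N.
Proof.
rewrite !totient_count_coprime -count_coprime_period.
apply: leq_sum => i _; case: (coprime (q * d) i) /idP => // H.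
by rewrite (coprime_dvdl (dvdn_mull q (dvdnn d)) H).
Qed.

Lemma lam_big (m : nat -> nat) (n N : nat) : (0 < n)%N -> (n < N)%N ->
  lam m n = (\prod_(0 <= p < N) p ^ (m p * logn p n))%N.
Proof.
move=> n0 nN; rewrite /lam -(filter_pi_of nN) big_filter big_mkcond /=.
apply: eq_bigr => p _; case: ifP => //.
move=> H; have /eqP -> : (logn p n == 0)%N by rewrite eqn0Ngt logn_gt0 H.
by rewrite muln0.
Qed.

Lemma lam_mul (m : nat -> nat) (q d : nat) : (0 < q)%N -> (0 < d)%N ->
  lam m (q * d) = (lam m q * lam m d)%N.
Proof.
move=> q0 d0.
have qd0 : (0 < q * d)%N by rewrite muln_gt0 q0 d0.
rewrite !(@lam_big m _ (q * d).+1) //; last 2 first.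
- by rewrite ltnS leq_pmull.
- by rewrite ltnS leq_pmulr.
rewrite (eq_bigr (fun p => p ^ (m p * logn p q) * p ^ (m p * logn p d))%N).
  by rewrite big_split.
by move=> p _; rewrite lognM // mulnDr expnD.
Qed.

Lemma lam_gt0 (m : nat -> nat) (n : nat) : (0 < lam m n)%N.
Proof.
rewrite /lam big_seq; apply: prodn_cond_gt0 => p; rewrite mem_primes => /and3P[pp _ _].
by rewrite expn_gt0 prime_gt0.
Qed.

Lemma z_compat (z : nat -> nat -> int) (p : nat) :
  (forall n, (z p n.+1 == z p n %[mod (p ^ n)%:Z])%Z) ->
  forall k n, (k <= n)%N -> ((p ^ k)%:Z %| z p n - z p k)%Z.
Proof.
move=> H k; elim=> [|n IH].
  by rewrite leqn0 => /eqP ->; rewrite subrr dvdz0.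
rewrite leq_eqVlt => /orP[/eqP ->|]; first by rewrite subrr dvdz0.
rewrite ltnS => kn.
have -> : z p n.+1 - z p k = (z p n.+1 - z p n) + (z p n - z p k) by ring.
apply: rpredD; last exact: IH.
apply: (dvdz_trans _ (_ : ((p ^ n)%:Z %| _)%Z)); last by rewrite -eqz_mod_dvd; exact: H.
by rewrite dvdzE !absz_nat dvdn_exp2l.
Qed.

Lemma r_cong (z : nat -> nat -> int) (r : nat -> int) (d Q : nat) :
  (forall p n, prime p -> (z p n.+1 == z p n %[mod (p ^ n)%:Z])%Z) ->
  (forall p, prime p -> (p %| d)%N ->
        (r d == z p (logn p d) %[mod (p ^ logn p d)%:Z])%Z) ->
  (forall p, prime p -> (p %| Q)%N ->
        (r Q == z p (logn p Q) %[mod (p ^ logn p Q)%:Z])%Z) ->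
  (0 < d)%N -> (0 < Q)%N -> (d %| Q)%N ->
  ((d%:Z) %| r Q - r d)%Z.
Proof.
move=> Hc Hd HQ d0 Q0 dQ.
rewrite dvdzE absz_nat; apply/dvdn_partP => // p; rewrite mem_primes => /and3P[pp _ pd].
rewrite p_part.
have -> : (p ^ logn p d %| `|r Q - r d|)%N = ((p ^ logn p d)%:Z %| r Q - r d)%Z.
  by rewrite dvdzE absz_nat.
have le : (logn p d <= logn p Q)%N by apply: dvdn_leq_log.
have -> : r Q - r d = (r Q - z p (logn p Q)) + (z p (logn p Q) - z p (logn p d))
   + - (r d - z p (logn p d)) by ring.
apply: rpredD; [apply: rpredD|rewrite rpredN].
- apply: (dvdz_trans _ (_ : ((p ^ logn p Q)%:Z %| _)%Z)).
    by rewrite dvdzE !absz_nat dvdn_exp2l.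
  by rewrite -eqz_mod_dvd; apply: HQ => //; apply: dvdn_trans dQ.
- by apply: z_compat => // n; apply: Hc.
- by rewrite -eqz_mod_dvd; apply: Hd.
Qed.

Lemma nu_ge0 (R : realType) (r : nat -> int) (d y : nat) : 0 <= nu R r d y.
Proof.
rewrite /nu; case: ifP => [/andP[_ /andP[t0 pt]]|_] //.
apply: mulr_ge0; first by apply: divr_ge0.
apply: ln_ge0; rewrite ler1z; exact: t0.
Qed.

Lemma indR_ge0 (R : realType) (B : set int) t : 0 <= indR R B t.
Proof. by rewrite /indR; case: ifP. Qed.

Lemma indR_mono (R : realType) (B B' : set int) t t' :
  (forall z : int, t = z%:~R -> B z -> exists2 z' : int, t' = z'%:~R & B' z') ->
  indR R B t <= indR R B' t'.
Proof.
move=> H; rewrite /indR; case: asboolP => [[z tz Bz]|_]; last by case: ifP.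
by have [z' t'z B'z'] := H z tz Bz; rewrite asboolT //; exists z'.
Qed.

Lemma esum_le_inj (R : realType) (T T' : choiceType) (P : set T) (Q : set T')
   (f : T -> T') (a : T -> \bar R) (b : T' -> \bar R) :
  set_inj P f -> f @` P `<=` Q -> (forall j, Q j -> (0 <= b j)%E) ->
  (forall i, P i -> (a i <= b (f i))%E) ->
  (\esum_(i in P) a i <= \esum_(j in Q) b j)%E.
Proof.
move=> inj sub b0 ab.
apply: (le_trans (le_esum ab)); rewrite -(esum_image P f b) //.
have -> : f @` P = Q `&` (f @` P) by rewrite setIidr.
rewrite esum_mkcondr; apply: le_esum => j Qj; case: ifP => // _.
exact: b0.
Qed.

Lemma totient_ratio (R : realType) (q d : nat) : (0 < q)%N -> (0 < d)%N ->
  (totient (q * d))%:R / (q * d)%N%:R <= (totient d)%:R / d%:R :> R.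
Proof.
move=> q0 d0.
have qR : (0 < q%:R :> R) by rewrite ltr0n.
have dR : (0 < d%:R :> R) by rewrite ltr0n.
rewrite ler_pdivrMr ?ltr0n ?muln_gt0 ?q0 //.
have -> : (totient d)%:R / d%:R * (q * d)%N%:R = (q * totient d)%N%:R :> R.
  rewrite !natrM; field; by rewrite gt_eqF.
by rewrite ler_nat totient_mul_le.
Qed.

Theorem proposition1 (R : realType) (h : {poly int})
  (z : nat -> nat -> int) (m : nat -> nat) (r : nat -> int)
  (Hdeg : (2 <= (size h).-1)%N) (Hlead : 0 < lead_coef h)
  (Hz_compat : forall p n, prime p -> (z p n.+1 == z p n %[mod (p ^ n)%:Z])%Z)
  (Hz_root : forall p n, prime p -> ((p ^ n)%:Z %| h.[z p n])%Z)
  (Hz_unit : forall p, prime p -> ~~ ((p%:Z) %| z p 1%N)%Z)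
  (Hm : forall p, prime p ->
     (forall j, (j < m p)%N -> forall n, ((p ^ n)%:Z %| (h^`N(j)).[z p n])%Z) /\
     ~ (forall n, ((p ^ n)%:Z %| (h^`N(m p)).[z p n])%Z))
  (Hr : forall d, (0 < d)%N ->
     [/\ - (d%:Z) < r d, r d <= 0 &
      forall p, prime p -> (p %| d)%N ->
        (r d == z p (logn p d) %[mod (p ^ logn p d)%:Z])%Z])
  (L L' q : nat) (x : int)
  (HL : (0 < L)%N) (HL' : (0 < L')%N) (Hq : (0 < q)%N)
  (HLL' : (L'%:R : rat) <= L%:R / (lam m q)%:R)
  (B B' : set int)
  (HB : B `<=` [set t : int | 1 <= t <= L%:Z])
  (HB' : B' `<=` [set l : int | (1 <= l <= L'%:Z) /\ B (x + l * (lam m q)%:Z)]) :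
  forall d : nat, (0 < d)%N ->
    (Rsum R h r m (q * d) B' L' <= Rsum R h r m d B L)%E.
Proof.
move=> d d0.
have Q0 : (0 < q * d)%N by rewrite muln_gt0 Hq d0.
have [HrQ1 HrQ2 HrQ3] := Hr _ Q0.
have [Hrd1 Hrd2 Hrd3] := Hr _ d0.
have dv : (d%:Z %| r (q * d)%N - r d)%Z.
  exact: (@r_cong z r d (q * d)%N Hz_compat Hrd3 HrQ3 d0 Q0 (dvdn_mull q (dvdnn d))).
set k := ((r (q * d)%N - r d) %/ d%:Z)%Z.
have hk : k * d%:Z = r (q * d)%N - r d := divzK dv.
set lq := lam m q.
have lq0 : (0 < lq)%N := lam_gt0 m q.
have lamQ : lam m (q * d) = (lq * lam m d)%N := @lam_mul m q d Hq d0.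

have gpos : forall y : nat, (0 < y)%N -> 0 < k + q%:Z * y%:Z.
  move=> y y0.
  have : 0 < d%:Z * (k + q%:Z * y%:Z).
    rewrite mulrDr [d%:Z * k]mulrC hk.
    move: HrQ1 Hrd2; rewrite PoszM => H1 H2.
    have : (1 <= y%:Z) by rewrite lez_nat.
    nia.
  by rewrite pmulr_rgt0 // ltz_nat.
set g := fun y : nat => absz (k + q%:Z * y%:Z).
have gZ : forall y : nat, (0 < y)%N -> (g y)%:Z = k + q%:Z * y%:Z.
  by move=> y y0; rewrite /g gez0_abs // ltW // gpos.
have gpos' : forall y : nat, (0 < y)%N -> (0 < g y)%N.
  by move=> y y0; rewrite -ltz_nat gZ // gpos.
have gkey : forall y : nat, (0 < y)%N ->
    r d + d%:Z * (g y)%:Z = r (q * d)%N + (q * d)%N%:Z * y%:Z.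
  move=> y y0; rewrite gZ // mulrDr [d%:Z * k]mulrC hk PoszM; ring.
have hkey : forall y : nat, (0 < y)%N ->
    hd h r m d (g y) = lq%:R * hd h r m (q * d) y.
  move=> y y0; rewrite /hd gkey // lamQ natrM.
  have : (lam m d)%:R != 0 :> rat by rewrite pnatr_eq0 -lt0n lam_gt0.
  have : lq%:R != 0 :> rat by rewrite pnatr_eq0 -lt0n.
  move=> ? ?; field.
  by apply/andP.
have sR : (0 < (sconst h)%:R :> rat) by rewrite ltr0n /sconst addn_gt0 orbT.
have lqR : (0 < lq%:R :> rat) by rewrite ltr0n.
have LL : lq%:R * L'%:R <= L%:R :> rat.
  by rewrite mulrC -ler_pdivlMr.
rewrite /Rsum.
apply: (@esum_le_inj R _ _ _ _ (fun xy : int * nat => (x + xy.1 * lq%:Z, g xy.2))).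
- move=> [a1 a2] [b1 b2]; rewrite !inE /= => -[a20 _] [b20 _] [e1 e2].
  have lqz : lq%:Z != 0 by rewrite eqz_nat -lt0n.
  have qz : q%:Z != 0 by rewrite eqz_nat -lt0n.
  move: e1 => /addrI /(mulIf lqz) ->.
  move: e2 => /(congr1 Posz); rewrite !gZ // => /addrI /(mulfI qz) [->] //.
- move=> _ [[a1 a2] /= [a20 [Ha1 Ha2]] <-] /=.
  rewrite /Hd /= hkey //; split; first exact: gpos'.
  split; first by rewrite mulr_gt0.
  apply: (lt_le_trans (_ : _ < lq%:R * (L'%:R / (sconst h)%:R))).
    by rewrite ltr_pM2l.
  by rewrite mulrA ler_pM2r ?invr_gt0.
- move=> j _; rewrite lee_fin; apply: mulr_ge0; last exact: nu_ge0.
  by apply: mulr_ge0; exact: indR_ge0.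
- move=> [a1 a2]; rewrite /= => -[a20 _].
  rewrite lee_fin; apply: ler_pM.
  + by apply: mulr_ge0; exact: indR_ge0.
  + exact: nu_ge0.
  + apply: ler_pM; try exact: indR_ge0.
    * apply: indR_mono => z0 /intr_inj <- /HB' [_ Bz].
      by exists (x + a1 * lq%:Z).
    * apply: indR_mono => z0 tz /HB' [_ Bz].
      exists (x + z0 * lq%:Z) => //.
      rewrite hkey // -[X in X%:~R]/(x + a1 * lq%:Z) !rmorphD !rmorphM /= -tz.
      rewrite pmulrn; ring.
  + rewrite /nu gkey // a20 gpos' //=.
    case: ifP => // /andP[t0 _].
    apply: ler_wpM2r; last exact: totient_ratio.
    by apply: ln_ge0; rewrite ler1z.
Qed.
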